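(* Let $d\ge 4$ be an integer such that there exists a Hadamard matrix of order $d$ (a $d\times d$ matrix $H_d$ with entries $\pm1$ satisfying $H_d^TH_d=d\,I_d$). Then there is an explicit construction of a $\big\lfloor\frac12\sqrt{d}\big\rfloor$-neighborly centrally symmetric $d$-dimensional polytope with $4d$ vertices.
   Context: A polytope $P\subset\mathbb{R}^d$ is centrally symmetric (cs) if $P=-P$. A cs polytope $P$ is $k$-neighborly if every set of $k$ of its vertices, no two of which are antipodes (i.e. no two of the form $v,-v$), is the vertex set of a face of $P$. *)

(* Defs.v *)
From HB Require Import structures.
From mathcomp Require Import all_boot all_order all_algebra.
From mathcomp Require Import reals.
Set Implicit Arguments. Unset Strict Implicit. Unset Printing Implicit Defensive.
Import Order.TTheory GRing.Theory Num.Theory.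
Local Open Scope ring_scope.

Section Polytopes.
Variables (R : realType) (d : nat).
Local Notation pt := 'rV[R]_d.

Definition dotv (a x : pt) : R := \sum_(i < d) a 0 i * x 0 i.

Definition conv (V : seq pt) : pt -> Prop := fun x =>
  exists w : 'I_(size V) -> R,
    [/\ forall i, 0 <= w i, \sum_i w i = 1 & x = \sum_i w i *: V`_i].

(* F is a face of the convex set A: intersection of A with a supporting
   hyperplane {a.x = b} where a.x <= b on A (a = 0, b = 0 gives A itself;
   the empty face is also allowed). *)
Definition is_face (A F : pt -> Prop) : Prop :=
  exists (a : pt) (b : R), (forall x, A x -> dotv a x <= b) /\
    (forall x, F x <-> (A x /\ dotv a x = b)).

Definition is_vertex (A : pt -> Prop) (v : pt) : Prop :=
  is_face A (fun x => x = v).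

Definition centrally_symmetric (P : pt -> Prop) : Prop :=
  forall x, P x <-> P (- x).

Definition full_dimensional (P : pt -> Prop) : Prop :=
  forall (a : pt) (b : R), (forall x, P x -> dotv a x = b) -> a = 0.

Definition has_n_vertices (P : pt -> Prop) (n : nat) : Prop :=
  exists W : seq pt, [/\ uniq W, size W = n & forall v, is_vertex P v <-> v \in W].

Definition cs_neighborly (P : pt -> Prop) (k : nat) : Prop :=
  forall S : seq pt, uniq S -> size S = k ->
    (forall v, v \in S -> is_vertex P v) ->
    (forall v, v \in S -> - v \notin S) ->
    exists F, is_face P F /\ (forall v, is_vertex F v <-> v \in S).

End Polytopes.

Definition is_hadamard (d : nat) (H : 'M[int]_d) : Prop :=
  (forall i j, H i j = 1 \/ H i j = -1) /\ H^T *m H = (d%:Z)%:M.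

(* Main.v *)
Require Import Defs.
From HB Require Import structures.
From mathcomp Require Import all_boot all_order all_algebra.
From mathcomp Require Import reals.
From mathcomp Require Import ring lra zify.
Import Order.TTheory GRing.Theory Num.Theory.
Local Open Scope ring_scope.
Set Implicit Arguments. Unset Strict Implicit. Unset Printing Implicit Defensive.

Section Gen.
Variables (R : realType) (d : nat).
Local Notation pt := 'rV[R]_d.
Implicit Types (a x v : pt) (V : seq pt).

Lemma dotvC a x : dotv a x = dotv x a.
Proof. by apply: eq_bigr => i _; rewrite mulrC. Qed.

Lemma dotvNl a x : dotv (- a) x = - dotv a x.
Proof. rewrite /dotv -sumrN; apply: eq_bigr => i _; by rewrite mxE mulNr. Qed.

Lemma dotvNr a x : dotv a (- x) = - dotv a x.
Proof. by rewrite dotvC dotvNl dotvC. Qed.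

Lemma dotv_sumr (I : finType) (w : I -> R) (X : I -> pt) a :
  dotv a (\sum_i w i *: X i) = \sum_i w i * dotv a (X i).
Proof.
rewrite /dotv.
under eq_bigr => j _ do rewrite summxE mulr_sumr.
rewrite exchange_big; apply: eq_bigr => i _; rewrite mulr_sumr.
by apply: eq_bigr => j _; rewrite mxE mulrCA.
Qed.

Section Supp.
Variables (n : nat) (w : 'I_n -> R) (X : 'I_n -> pt).
Hypotheses (w0 : forall i, 0 <= w i) (w1 : \sum_i w i = 1).

Lemma supp_le a b : (forall i, 0 < w i -> dotv a (X i) <= b) ->
  dotv a (\sum_i w i *: X i) <= b.
Proof.
move=> H; rewrite dotv_sumr.
have -> : b = \sum_i w i * b by rewrite -mulr_suml w1 mul1r.
apply: ler_sum => i _.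
have := w0 i; rewrite le0r => /orP[/eqP ->|wp]; first by rewrite !mul0r.
by rewrite ler_wpM2l // H.
Qed.

Lemma supp_eq a b : (forall i, 0 < w i -> dotv a (X i) <= b) ->
  dotv a (\sum_i w i *: X i) = b -> forall i, 0 < w i -> dotv a (X i) = b.
Proof.
move=> H E.
have S0 : \sum_i w i * (b - dotv a (X i)) = 0.
  under eq_bigr => i _ do rewrite mulrBr.
  by rewrite sumrB -mulr_suml w1 mul1r -dotv_sumr E subrr.
have P0 : forall i, true -> 0 <= w i * (b - dotv a (X i)).
  move=> i _; have := w0 i; rewrite le0r => /orP[/eqP ->|wp]; first by rewrite mul0r.
  by rewrite mulr_ge0 // subr_ge0 H.
move=> i wp; have := psumr_eq0P P0 S0 (i:=i) erefl => /eqP.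
rewrite mulf_eq0 (gt_eqF wp) /= subr_eq0 => /eqP <-. by [].
Qed.

Lemma supp_const v : (forall i, 0 < w i -> X i = v) -> \sum_i w i *: X i = v.
Proof.
move=> H; have -> : \sum_i w i *: X i = \sum_i w i *: v.
  apply: eq_bigr => i _; have := w0 i; rewrite le0r => /orP[/eqP ->|wp].
    by rewrite !scale0r.
  by rewrite H.
by rewrite -scaler_suml w1 scale1r.
Qed.

Lemma supp_exists : exists i, 0 < w i.
Proof.
case: (pickP (fun i => 0 < w i)) => [i wi|H]; first by exists i.
have : \sum_i w i = 0.
  apply: big1 => i _; apply/eqP; rewrite eq_le w0 andbT; have := H i.
  by rewrite /= lt_neqAle w0 andbT eq_sym => /negbFE /eqP ->.
by rewrite w1 => /eqP; rewrite oner_eq0.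
Qed.
End Supp.

Definition suppc V (F : pt -> Prop) := forall x, F x ->
  exists w : 'I_(size V) -> R, [/\ forall i, 0 <= w i, \sum_i w i = 1,
     x = \sum_i w i *: V`_i & forall i, 0 < w i -> F V`_i].

Lemma conv_nth V (i : 'I_(size V)) : conv V V`_i.
Proof.
exists (fun j => (j == i)%:R); split.
- by move=> j; rewrite ler0n.
- by rewrite (bigD1 i) //= eqxx big1 ?addr0 // => j /negbTE ->.
- by rewrite (bigD1 i) //= eqxx scale1r big1 ?addr0 // => j /negbTE ->; rewrite scale0r.
Qed.

Lemma conv_mem V v : v \in V -> conv V v.
Proof.
move=> vV; have := conv_nth (Ordinal (etrans (index_mem v V) vV)).
by rewrite /= nth_index.
Qed.

Lemma suppc_conv V : suppc V (conv V).
Proof.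
move=> x [w [w0 w1 ->]]; exists w; split => // i _; exact: conv_nth.
Qed.

Lemma conv_le V a b : (forall i : 'I_(size V), dotv a V`_i <= b) ->
  forall x, conv V x -> dotv a x <= b.
Proof. by move=> H x [w [w0 w1 ->]]; apply: supp_le => // i _; apply: H. Qed.

Lemma suppc_face V a : (forall i : 'I_(size V), dotv a V`_i <= 1) ->
  suppc V (fun x => conv V x /\ dotv a x = 1).
Proof.
move=> H x [[w [w0 w1 xE]] ax]; exists w; split => // i wi; split.
  exact: conv_nth.
have := supp_eq w0 w1 (X := fun j => V`_j) (a:=a) (b:=1).
have H1 : forall j, 0 < w j -> dotv a V`_j <= 1 by move=> j _; apply: H.
by move/(_ H1); rewrite -xE => /(_ ax i wi).
Qed.

Lemma vertex_in V F v : suppc V F -> is_vertex F v ->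
  exists i : 'I_(size V), F V`_i /\ v = V`_i.
Proof.
move=> sF [a [b [Hle Heq]]].
have [Fv av] := (proj1 (Heq v) erefl).
have [w [w0 w1 vE supp]] := sF v Fv.
have [i wi] := supp_exists w0 w1.
exists i; split; first exact: supp.
have : dotv a V`_i = b.
  apply: (supp_eq w0 w1 (X := fun j => V`_j)) => //; last by rewrite -vE.
  by move=> j wj; apply: Hle; apply: supp.
by move=> ai; symmetry; apply/(proj2 (Heq V`_i)); split => //; apply: supp.
Qed.

Lemma vertex_of V F v a : suppc V F -> F v ->
  (forall i : 'I_(size V), F V`_i -> V`_i != v -> dotv a V`_i < dotv a v) ->
  is_vertex F v.
Proof.
move=> sF Fv H; exists a, (dotv a v); split.
  move=> x Fx; have [w [w0 w1 -> supp]] := sF x Fx.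
  apply: supp_le => // i wi; have [->|ne] := eqVneq V`_i v; first by [].
  by apply/ltW/H => //; apply: supp.
move=> x; split; first by move=> ->.
move=> [Fx ax]; have [w [w0 w1 xE supp]] := sF x Fx.
have le : forall i, 0 < w i -> dotv a V`_i <= dotv a v.
  move=> i wi; have [->|ne] := eqVneq V`_i v; first by [].
  by apply/ltW/H => //; apply: supp.
have eq := supp_eq w0 w1 le; rewrite -xE in eq; have {}eq := eq ax.
rewrite xE; apply: supp_const => // i wi.
apply/eqP; apply: contraT => ne; have := H i (supp i wi) ne.
by rewrite eq // ltxx.
Qed.

End Gen.


Lemma unit_of_inj (R : realType) n (A : 'M[R]_n) :
  (forall u : 'rV_n, u *m A = 0 -> u = 0) -> A \in unitmx.
Proof.
move=> inj; rewrite -row_free_unit -kermx_eq0; apply/eqP/row_matrixP => i.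
rewrite row0; apply: inj; by rewrite -row_mul mulmx_ker row0.
Qed.

Lemma argm (R : realType) n (f : 'I_n.+1 -> R) : exists n0, forall m, f m <= f n0.
Proof.
case: (@arg_maxP _ R _ ord0 predT f erefl) => i _ H; exists i => m; exact: H.
Qed.

Lemma gram_bound (R : realType) n (G : 'M[R]_n) mu (u : 'rV[R]_n) r :
  (forall m, G m m = 1) -> (forall m j, m != j -> `|G m j| <= mu) ->
  n.-1%:R * mu < 1 ->
  (forall j, `|(u *m G) 0 j| <= r) -> forall m, `|u 0 m| * (1 - n.-1%:R * mu) <= r.
Proof.
case: n G u => [|n] G u Gd Go Hmu Hr m; first by case: m.
have [n0 Hn0] := argm (fun j => `|u 0 j|).
pose M := `|u 0 n0|.
rewrite /= in Hmu *.
have D0 : 0 <= 1 - n%:R * mu by rewrite subr_ge0 ltW.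
apply: le_trans (ler_wpM2r D0 (Hn0 m)) _; rewrite -/M.
have E : (u *m G) 0 n0 = u 0 n0 + \sum_(j | j != n0) u 0 j * G j n0.
  by rewrite mxE (bigD1 n0) //= Gd mulr1.
have S : `|\sum_(j | j != n0) u 0 j * G j n0| <= n%:R * (M * mu).
  apply: le_trans (ler_norm_sum _ _ _) _.
  have S1 : \sum_(j | j != n0) `|u 0 j * G j n0| <= \sum_(j | j != n0) M * mu.
    apply: ler_sum => j jn; rewrite normrM; apply: ler_pM => //.
    exact: Go.
  apply: le_trans S1 _.
  have H : \sum_(j < n.+1) M * mu = (M * mu) + \sum_(j | j != n0) M * mu.
    by rewrite (bigD1 n0).
  rewrite sumr_const card_ord in H.
  have -> : \sum_(j | j != n0) M * mu = (M * mu) *+ n.+1 - M * mu.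
    by rewrite H addrC addKr.
  by rewrite mulrSr addrK mulr_natl.
have : M <= r + n%:R * (M * mu).
  rewrite {1}/M (_ : u 0 n0 = (u *m G) 0 n0 - \sum_(j | j != n0) u 0 j * G j n0); last first.
    by rewrite E addrK.
  apply: le_trans (ler_normB _ _) _; apply: lerD => //.
move=> HM.
have -> : M * (1 - n%:R * mu) = M - n%:R * (M * mu) by ring.
lra.
Qed.

Section Core.
Variables (R : realType) (d : nat) (V : seq 'rV[R]_d) (mu : R).
Hypotheses (Vunit : forall u, u \in V -> dotv u u = 1)
 (Vcoh : forall u w, u \in V -> w \in V -> [\/ w = u, w = -u | `|dotv u w| <= mu])
 (mu0 : 0 <= mu) (mu1 : mu < 1).

Lemma Vlt1 u w : u \in V -> w \in V -> w != u -> dotv u w < 1.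
Proof.
move=> uV wV ne; case: (Vcoh uV wV) => [e|->|h].
- by rewrite e eqxx in ne.
- rewrite dotvNr Vunit //; lra.
- exact: le_lt_trans (ler_norm _) (le_lt_trans h mu1).
Qed.

Lemma vertex_conv v : is_vertex (conv V) v <-> v \in V.
Proof.
split.
  by move=> /(vertex_in (@suppc_conv _ _ V)) [i [_ ->]]; apply: mem_nth.
move=> vV; apply: (vertex_of (a := v) (@suppc_conv _ _ V)); first exact: conv_mem.
move=> i _ ne; rewrite Vunit //; apply: Vlt1 => //; exact: mem_nth.
Qed.

Lemma functional S : {subset S <= V} -> uniq S -> (forall v, v \in S -> - v \notin S) ->
  ((size S)%:R + (size S).-1%:R) * mu < 1 ->
  exists a, (forall s, s \in S -> dotv a s = 1) /\
            (forall w, w \in V -> w \notin S -> dotv a w < 1).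
Proof.
move=> SV Su Sn Hk; set k := size S in Hk.
pose G : 'M[R]_k := \matrix_(m, j) dotv S`_m S`_j.
have Gd : forall m, G m m = 1 by move=> m; rewrite mxE Vunit // SV // mem_nth.
have Go : forall m j, m != j -> `|G m j| <= mu.
  move=> m j mj; rewrite mxE.
  have mS : S`_m \in S := mem_nth 0 (ltn_ord m).
  have jS : S`_j \in S := mem_nth 0 (ltn_ord j).
  case: (Vcoh (SV _ mS) (SV _ jS)) => [e|e|//].
  - have := nth_uniq 0 (ltn_ord j) (ltn_ord m) Su; rewrite e eqxx => /esym /eqP /val_inj jm.
    by rewrite jm eqxx in mj.
  - by have := Sn _ mS; rewrite -e jS.
have kmu : 0 <= k%:R * mu by rewrite mulr_ge0.
have k1 : k.-1%:R * mu < 1 by rewrite mulrDl in Hk; lra.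
have Dp : 0 < 1 - k.-1%:R * mu by rewrite subr_gt0.
have Gu : G \in unitmx.
  apply: unit_of_inj => u uG0; apply/rowP => m; rewrite [RHS]mxE.
  have := @gram_bound _ _ G mu u 0 Gd Go k1.
  move=> /(_ _ m); rewrite pmulr_lle0 // normr_le0 => /(_ _)/eqP; apply.
  by move=> j; rewrite uG0 mxE normr0.
pose c : 'rV[R]_k := const_mx 1 *m invmx G.
have cG : c *m G = const_mx 1 by rewrite -mulmxA mulVmx // mulmx1.
pose a := \sum_m c 0 m *: S`_m.
have da : forall x, dotv a x = \sum_m c 0 m * dotv S`_m x.
  by move=> x; rewrite dotvC dotv_sumr; apply: eq_bigr => m _; rewrite dotvC.
have P1 : forall s, s \in S -> dotv a s = 1.
  move=> s sS; rewrite -(nth_index 0 sS).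
  have ik : (index s S < k)%N by rewrite index_mem.
  rewrite da; have := congr1 (fun M : 'rV[R]_k => M 0 (Ordinal ik)) cG; rewrite !mxE => <-.
  by apply: eq_bigr => m _; rewrite /G; congr (_ * _); rewrite mxE.
exists a; split => // w wV wS.
case: (boolP (- w \in S)) => nwS.
  rewrite -[w]opprK dotvNr P1 //; lra.
have Hw : forall m : 'I_k, `|dotv S`_m w| <= mu.
  move=> m; have mS : S`_m \in S := mem_nth 0 (ltn_ord m).
  case: (Vcoh (SV _ mS) wV) => [e|e|//].
  - by rewrite e mS in wS.
  - by rewrite e opprK mS in nwS.
have cb : forall m, `|c 0 m| * (1 - k.-1%:R * mu) <= 1.
  apply: (@gram_bound _ _ G mu c 1 Gd Go k1) => j.
  by rewrite cG mxE normr1.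
have B : `|dotv a w| * (1 - k.-1%:R * mu) <= k%:R * mu.
  rewrite da; apply: le_trans (ler_wpM2r (ltW Dp) (ler_norm_sum _ _ _)) _.
  rewrite mulr_suml.
  have -> : k%:R * mu = \sum_(m < k) mu by rewrite sumr_const card_ord mulr_natl.
  apply: ler_sum => m _; rewrite normrM mulrAC.
  have := cb m; have := Hw m; have := normr_ge0 (dotv S`_m w).
  have := normr_ge0 (c 0 m); nra.
have : `|dotv a w| < 1.
  have : `|dotv a w| * (1 - k.-1%:R * mu) < 1 * (1 - k.-1%:R * mu).
    rewrite mul1r; apply: le_lt_trans B _; rewrite mulrDl in Hk; lra.
  by rewrite ltr_pM2r.
exact: le_lt_trans (ler_norm _).
Qed.
End Core.


Lemma cs_of_inv (R : realType) d (V : seq 'rV[R]_d) (f : 'I_(size V) -> 'I_(size V)) :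
  (forall i, f (f i) = i) -> (forall i, V`_(f i) = - V`_i) ->
  centrally_symmetric (conv V).
Proof.
move=> ff fV.
have finj : injective f by apply: (can_inj ff).
suff H : forall x, conv V x -> conv V (- x).
  by move=> x; split; [apply: H | move/H; rewrite opprK].
move=> x [w [w0 w1 ->]]; exists (fun i => w (f i)); split => //.
  by rewrite -w1 [RHS](reindex_inj finj).
rewrite [RHS](reindex_inj finj) /= -sumrN; apply: eq_bigr => i _.
by rewrite ff fV scalerN.
Qed.

Lemma modA (n N i : nat) : N = (n + n)%N -> (i < N)%N -> (((i + n) %% N + n) %% N = i)%N.
Proof. by move=> -> iN; rewrite modnDml -addnA modnDr modn_small. Qed.

Lemma nth_inv (R : realType) d (W : seq 'rV[R]_d) (i : nat) :
  (i < size W + size W)%N ->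
  (W ++ map -%R W)`_((i + size W) %% size (W ++ map -%R W))%N = - (W ++ map -%R W)`_i.
Proof.
rewrite size_cat size_map; set n := size W => iV.
case: (ltnP i n) => hi.
  rewrite modn_small ?ltn_add2r // nth_cat -/n ltnNge leq_addl /= addnK.
  by rewrite (nth_map 0) // nth_cat -/n hi.
have hin : (i - n < n)%N by rewrite -(ltn_add2r n) subnK.
have -> : (i + n = (i - n) + (n + n))%N by rewrite addnA subnK.
rewrite modnDr modn_small; last by rewrite (leq_ltn_trans (leq_subr n i)).
rewrite nth_cat -/n hin.
rewrite [in RHS]nth_cat -/n ltnNge hi /= (nth_map 0) ?opprK //.
Qed.

Section Main.
Variables (R : realType) (d : nat) (W : seq 'rV[R]_d) (mu : R).
Hypotheses (Wu : uniq W) (Wunit : forall u, u \in W -> dotv u u = 1)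
 (Wcoh : forall u w, u \in W -> w \in W -> w = u \/ `|dotv u w| <= mu)
 (mu0 : 0 <= mu) (mu1 : mu < 1).

Let V := W ++ map -%R W.

Lemma memV u : u \in V -> u \in W \/ - u \in W.
Proof.
rewrite mem_cat => /orP[|/mapP[w wW ->]]; first by left.
by right; rewrite opprK.
Qed.

Lemma memVN u : u \in W -> - u \in V.
Proof. by move=> uW; rewrite mem_cat; apply/orP; right; apply: map_f. Qed.

Lemma memVW u : u \in W -> u \in V.
Proof. by move=> uW; rewrite mem_cat uW. Qed.

Lemma Vunit u : u \in V -> dotv u u = 1.
Proof.
case/memV => h; first exact: Wunit.
by rewrite -[u]opprK dotvNl dotvNr opprK Wunit.
Qed.

Lemma Vcoh u w : u \in V -> w \in V -> [\/ w = u, w = -u | `|dotv u w| <= mu].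
Proof.
move=> /memV hu /memV hw.
have key : forall u' w', u' \in W -> w' \in W ->
   (u' = w' \/ `|dotv u' w'| <= mu) by move=> u' w' a b; case: (Wcoh a b); auto.
case: hu => hu; case: hw => hw.
- by case: (key _ _ hu hw) => [->|h]; [apply: Or31|apply: Or33].
- case: (key _ _ hu hw) => [e|h]; first by apply: Or32; rewrite e opprK.
  by apply: Or33; rewrite -[w]opprK dotvNr normrN.
- case: (key _ _ hu hw) => [e|h]; first by apply: Or32; rewrite -e.
  by apply: Or33; rewrite -[u]opprK dotvNl normrN.
- case: (key _ _ hu hw) => [e|h]; first by apply: Or31; apply: oppr_inj; exact: esym e.
  by apply: Or33; rewrite -[u]opprK -[w]opprK dotvNl dotvNr opprK.
Qed.

Lemma Vuniq : uniq V.
Proof.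
rewrite cat_uniq Wu (map_inj_uniq (@oppr_inj _)) Wu andbT /=.
apply/hasPn => x /mapP[w wW ->]; apply/negP => nw.
case: (Wcoh wW nw) => [e|h].
  have h2 : dotv w (- w) = 1 by rewrite e Wunit.
  by move: h2; rewrite dotvNr Wunit //; lra.
move: h mu1; rewrite dotvNr Wunit // normrN normr1; lra.
Qed.

Lemma Vcs : centrally_symmetric (conv V).
Proof.
have sV : size V = (size W + size W)%N by rewrite size_cat size_map.
have Np : forall i : 'I_(size V), (0 < size V)%N by move=> i; apply: leq_ltn_trans (ltn_ord i).
pose f (i : 'I_(size V)) : 'I_(size V) := Ordinal (ltn_pmod (i + size W) (Np i)).
apply: (@cs_of_inv _ _ V f).
  move=> i; apply: val_inj => /=; apply: modA => //; exact: ltn_ord.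
move=> i; rewrite /f /=; apply: nth_inv; rewrite -sV; exact: ltn_ord.
Qed.

Lemma Vvert_iff v : is_vertex (conv V) v <-> v \in V.
Proof. exact: (vertex_conv Vunit Vcoh mu1). Qed.

Lemma Vvert : has_n_vertices (conv V) (size V).
Proof. exists V; split => //; [exact: Vuniq | exact: Vvert_iff]. Qed.

Lemma Vneigh k : (k%:R + k.-1%:R) * mu < 1 -> cs_neighborly (conv V) k.
Proof.
move=> Hk S Su Ss Sv Sa.
have SV : {subset S <= V} by move=> v /Sv /Vvert_iff.
have Hk' : ((size S)%:R + (size S).-1%:R) * mu < 1 by rewrite Ss.
have [a [P1 P2]] := functional Vunit Vcoh mu0 SV Su Sa Hk'.
have le1 : forall i : 'I_(size V), dotv a V`_i <= 1.
  move=> i; have iV := mem_nth 0 (ltn_ord i).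
  case: (boolP (V`_i \in S)) => h; [by rewrite P1 | exact/ltW/P2].
exists (fun x => conv V x /\ dotv a x = 1); split.
  by exists a, 1; split => //; exact: conv_le le1.
move=> v; split.
  move=> /(vertex_in (suppc_face le1)) [i [[_ ai] ->]].
  apply: contraT => nS; have := P2 _ (mem_nth 0 (ltn_ord i)) nS.
  by rewrite ai ltxx.
move=> vS; apply: (vertex_of (a := v) (suppc_face le1)).
  by split; [apply: conv_mem; exact: SV | exact: P1].
move=> i _ ne; rewrite (Vunit (SV _ vS)).
by apply: (Vlt1 Vunit Vcoh mu1) => //; [exact: SV | exact: mem_nth].
Qed.

End Main.


Section Had.
Variables (R : realType) (d : nat) (H : 'M[int]_d).
Hypotheses (d4 : (4 <= d)%N) (hE : forall i j, H i j = 1 \/ H i j = -1)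
  (hHH : H^T *m H = (d%:Z)%:M).

Let s : R := Num.sqrt (d%:R).
Let E (i : 'I_d) : 'rV[R]_d := delta_mx 0 i.
Let F (j : 'I_d) : 'rV[R]_d := \row_l ((H l j)%:~R / s).

Lemma s2 : s * s = d%:R.
Proof. by rewrite -expr2 sqr_sqrtr // ler0n. Qed.

Lemma s_gt1 : 1 < s.
Proof.
have s0 : 0 <= s by apply: sqrtr_ge0.
have hd : (4%:R : R) <= d%:R by rewrite ler_nat.
have := s2; nra.
Qed.

Lemma dE x i : dotv (E i) x = x 0 i.
Proof.
rewrite /dotv (bigD1 i) //= big1 ?addr0 => [|j ji]; first by rewrite mxE !eqxx mul1r.
by rewrite mxE eqxx /= (negbTE ji) mul0r.
Qed.

Lemma hnorm i j : `|(H i j)%:~R : R| = 1.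
Proof. by case: (hE i j) => ->; rewrite ?normrN normr1. Qed.

Lemma dEF i j : dotv (E i) (F j) = (H i j)%:~R / s.
Proof. by rewrite dE mxE. Qed.

Lemma dFF j m : dotv (F j) (F m) = (j == m)%:R.
Proof.
have sn0 : s != 0 by have := s_gt1; rewrite lt_neqAle => /andP[_ h]; apply/eqP => e; move: h; rewrite e; lra.
rewrite /dotv.
have -> : \sum_(l < d) (F j) 0 l * (F m) 0 l =
          (\sum_(l < d) (H l j)%:~R * (H l m)%:~R) / (s * s).
  rewrite mulr_suml; apply: eq_bigr => l _; rewrite !mxE; field; exact: sn0.
have -> : \sum_(l < d) ((H l j)%:~R * (H l m)%:~R : R) = ((H^T *m H) j m)%:~R.
  rewrite mxE rmorph_sum; apply: eq_bigr => l _; by rewrite /= mxE intrM.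
rewrite hHH mxE s2; case: (j == m) => /=.
  rewrite mulr1n (_ : (d%:~R : R) = d%:R) //  divff //; apply/eqP => e; move: d4; rewrite -(@ler_nat R) e; lra.
by rewrite mulr0n mul0r.
Qed.

Let W := map E (enum 'I_d) ++ map F (enum 'I_d).

Lemma memW u : u \in W -> (exists i, u = E i) \/ (exists j, u = F j).
Proof.
by rewrite mem_cat => /orP[/mapP[i _ ->]|/mapP[j _ ->]]; [left|right]; eexists.
Qed.

Lemma Wunit u : u \in W -> dotv u u = 1.
Proof. by case/memW => [[i ->]|[j ->]]; rewrite ?dE ?dFF ?mxE !eqxx. Qed.

Lemma Wcoh u w : u \in W -> w \in W -> w = u \/ `|dotv u w| <= s^-1.
Proof.
have si : 0 <= s^-1 by rewrite invr_ge0 sqrtr_ge0.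
case/memW => [[i ->]|[j ->]]; case/memW => [[l ->]|[m ->]].
- rewrite dE mxE eqxx /=; case: eqVneq => [->|_]; [by left | by right; rewrite normr0].
- by right; rewrite dEF normrM hnorm mul1r ger0_norm.
- by right; rewrite dotvC dEF normrM hnorm mul1r ger0_norm.
- rewrite dFF; case: eqVneq => [->|_]; [by left | by right; rewrite normr0].
Qed.

Lemma Einj : injective E.
Proof.
move=> i l e; have := dE (E l) i; rewrite e dE !mxE eqxx /=.
by case: (eqVneq i l) => // _; rewrite eqxx /= => /eqP; rewrite oner_eq0.
Qed.

Lemma Finj : injective F.
Proof.
move=> j m e; have := dFF j m; rewrite e dFF eqxx.
by case: (eqVneq j m) => // _ /= /eqP; rewrite oner_eq0.
Qed.

Lemma Wuniq : uniq W.
Proof.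
rewrite cat_uniq !(map_inj_uniq Einj, map_inj_uniq Finj) enum_uniq /= andbT.
apply/hasPn => x /mapP[j _ ->]; apply/negP => /mapP[i _ e].
have := dEF i j; rewrite e dE mxE !eqxx /= => h.
have sn0 : s != 0 by apply/eqP => z; move: s_gt1; rewrite z; lra.
have hs : ((H i j)%:~R : R) = s.
  by apply: (mulIf (invr_neq0 sn0)); rewrite -h divff.
have := hnorm i j; have := s_gt1; rewrite hs.
move=> h1; rewrite ger0_norm; lra.
Qed.

Lemma kbound : ((Num.truncn (s / 2))%:R + (Num.truncn (s / 2)).-1%:R) * s^-1 < 1.
Proof.
set k := Num.truncn (s / 2).
have s1 := s_gt1.
have hk : (k%:R : R) <= s / 2 by rewrite truncn_le; lra.
rewrite -/(_ / s) ltr_pdivrMr ?mul1r; last lra.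
move: hk; case: k => [|k'] hk /=; first by rewrite add0r; lra.
rewrite -addn1 natrD in hk *; lra.
Qed.

Lemma had_main : exists V : seq 'rV[R]_d,
    let P := conv V in
    [/\ centrally_symmetric P, full_dimensional P, has_n_vertices P (4 * d)
      & cs_neighborly P (Num.truncn (Num.sqrt (d%:R : R) / 2))].
Proof.
have s1 := s_gt1.
have si0 : 0 <= s^-1 by rewrite invr_ge0; lra.
have si1 : s^-1 < 1 by rewrite invf_lt1 //; lra.
exists (W ++ map -%R W) => /=; split.
- exact: Vcs.
- move=> a b hab; apply/rowP => i; rewrite mxE.
  have EW : E i \in W by rewrite mem_cat; apply/orP; left; apply: map_f; rewrite mem_enum.
  have h1 := hab _ (conv_mem (memVW EW)).
  have h2 := hab _ (conv_mem (memVN EW)).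
  rewrite dotvNr dotvC dE in h2; rewrite dotvC dE in h1; lra.
- have -> : (4 * d = size (W ++ map -%R W))%N.
    rewrite /W !(size_cat, size_map) -enumT size_enum_ord; lia.
  exact: (Vvert Wuniq Wunit Wcoh si1).
- exact: (Vneigh Wunit Wcoh si0 si1 kbound).
Qed.

End Had.

Unset Implicit Arguments.
Theorem theorem1p1 (R : realType) (d : nat) :
  (4 <= d)%N ->
  (exists H : 'M[int]_d, is_hadamard H) ->
  exists V : seq 'rV[R]_d,
    let P := conv V in
    [/\ centrally_symmetric P, full_dimensional P, has_n_vertices P (4 * d)
      & cs_neighborly P (Num.truncn (Num.sqrt (d%:R : R) / 2))].
Proof. by move=> d4 [H [hE hHH]]; apply: (@had_main R d H d4 hE hHH). Qed.
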